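(* Let $n\ge2$ be an integer and let $S(K_n)$ be the complete subdivision of $K_n$. Then (i) $\chi_{\mathrm{so}}(S(K_n))=n$, except that $\chi_{\mathrm{so}}(S(K_2))=3$ and $\chi_{\mathrm{so}}(S(K_4))=5$; (ii) $\alpha_{\mathrm{od}}(S(K_n))=\binom n2$ if $n$ is even, and $\alpha_{\mathrm{od}}(S(K_n))=\binom{n-1}2+1$ if $n$ is odd.
   Context: $S(K_n)$ is obtained from the complete graph $K_n$ by subdividing every edge once by a new vertex. An odd independent set in $G=(V,E)$ is an independent set $S$ such that every $v\in V\setminus S$ has either no neighbor or an odd number of neighbors in $S$; $\alpha_{\mathrm{od}}(G)$ is its maximum size. A strong odd coloring is a proper coloring such that for each vertex $v$ every color on $N(v)$ occurs an odd number of times on $N(v)$; $\chi_{\mathrm{so}}(G)$ is the minimum number of colors. *)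

(* Defs.v *)
From mathcomp Require Import all_boot.
Set Implicit Arguments. Unset Strict Implicit. Unset Printing Implicit Defensive.

Section Graphs.
Variable T : finType.
Variable e : rel T.

Definition nbhd (v : T) : {set T} := [set u | e v u].

Definition proper_coloring (k : nat) (c : T -> 'I_k) : Prop :=
  forall u v, e u v -> c u != c v.

Definition strong_odd_coloring (k : nat) (c : T -> 'I_k) : Prop :=
  proper_coloring c /\
  forall v u, u \in nbhd v -> odd #|[set w in nbhd v | c w == c u]|.

Definition chi_so_is (k : nat) : Prop :=
  (exists c : T -> 'I_k, strong_odd_coloring c) /\
  (forall k', k' < k -> ~ exists c : T -> 'I_k', strong_odd_coloring c).

Definition independent (S : {set T}) : bool :=
  [forall x in S, forall y in S, ~~ e x y].

Definition odd_independent (S : {set T}) : bool :=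
  independent S &&
  [forall v in ~: S, (#|nbhd v :&: S| == 0) || odd #|nbhd v :&: S|].

Definition alpha_od : nat := \max_(S : {set T} | odd_independent S) #|S|.
End Graphs.

(* The complete subdivision S(K_n): original vertices 'I_n, and one
   subdivision vertex for each edge {i,j} of K_n, encoded as a pair (i,j)
   with i < j. *)
Definition SKn_V (n : nat) : finType :=
  ('I_n + {p : 'I_n * 'I_n | p.1 < p.2})%type.

Definition SKn_adj (n : nat) : rel (SKn_V n) :=
  fun x y =>
    match x, y with
    | inl i, inr p => (i == (val p).1) || (i == (val p).2)
    | inr p, inl i => (i == (val p).1) || (i == (val p).2)
    | _, _ => false
    end.

(* Main.v *)
Require Import Defs.
From mathcomp Require Import all_boot zify.
Set Implicit Arguments. Unset Strict Implicit. Unset Printing Implicit Defensive.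

Notation E n := {p : 'I_n * 'I_n | p.1 < p.2}.
Definition inc n (i : 'I_n) (p : E n) : bool := (i == (val p).1) || (i == (val p).2).

Lemma nbhd_inl n (i : 'I_n) :
  nbhd (@SKn_adj n) (inl i) = inr @: [set p | inc i p].
Proof.
apply/setP => -[j|q]; rewrite /nbhd !inE /=.
  by apply/esym/imsetP => -[q _].
apply/idP/imsetP => [h|[q' ]]; first by exists q; rewrite ?inE.
by rewrite inE => h [->].
Qed.

Lemma nbhd_inr n (p : E n) :
  nbhd (@SKn_adj n) (inr p) = [set inl (val p).1; inl (val p).2].
Proof.
apply/setP => -[j|q]; rewrite /nbhd !inE /=; last by [].
by rewrite !(inj_eq (@inl_inj _ _)) (eq_sym j) (eq_sym j).
Qed.

Lemma so_inj_lt n k (c : SKn_V n -> 'I_k) (i j : 'I_n) :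
  strong_odd_coloring (@SKn_adj n) c -> i < j -> c (inl i) != c (inl j).
Proof.
move=> [_ H] lt; apply/negP => /eqP eq.
pose p : E n := exist _ (i, j) lt.
have := H (inr p) (inl i); rewrite nbhd_inr /= => /(_ (set21 _ _)).
suff -> : [set w in [set inl i; inl j] | c w == c (inl i)] = [set inl i; inl j : SKn_V n].
  rewrite cards2 (inj_eq (@inl_inj _ _)).
  by rewrite neq_ltn lt.
apply/setP => w; rewrite !inE.
by case: eqP => [->|]; [rewrite eqxx | case: eqP => [->|] //=; rewrite eq eqxx].
Qed.

Lemma so_inj n k (c : SKn_V n -> 'I_k) :
  strong_odd_coloring (@SKn_adj n) c -> injective (fun i => c (inl i)).
Proof.
move=> H i j /= e; apply/eqP; apply: contraT => ne.
case: (ltngtP i j) => [lt|gt|eq].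
- by move: (so_inj_lt H lt); rewrite e eqxx.
- by move: (so_inj_lt H gt); rewrite e eqxx.
- by move: ne; rewrite (val_inj eq) eqxx.
Qed.

Lemma so_lower n k (c : SKn_V n -> 'I_k) :
  strong_odd_coloring (@SKn_adj n) c -> n <= k.
Proof.
move=> H; have := leq_card _ (so_inj H); by rewrite !card_ord.
Qed.

Definition oth n (i : 'I_n) (q : E n) : 'I_n :=
  if (val q).1 == i then (val q).2 else (val q).1.

Lemma E_neq n (q : E n) : (val q).1 != (val q).2.
Proof. by case: q => [[a b] /= h]; rewrite neq_ltn h. Qed.

Lemma oth_neq n (i : 'I_n) q : inc i q -> oth i q != i.
Proof.
rewrite /inc /oth => /orP[] /eqP ->; rewrite ?eqxx.
  by rewrite eq_sym (E_neq q).
by rewrite (negbTE (E_neq q)) (E_neq q).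
Qed.

Lemma oth_col n (i : 'I_n) q (col : nat -> nat -> nat) :
  (forall a b, col a b = col b a) -> inc i q ->
  col (val q).1 (val q).2 = col i (oth i q).
Proof.
move=> sym; rewrite /inc /oth.
by case/orP => /eqP ->; rewrite ?eqxx //; case: eqP => [->|] //; rewrite sym.
Qed.

Lemma oth_val n (i : 'I_n) q : inc i q ->
  (nat_of_ord (val q).1 = minn i (oth i q)) /\ (nat_of_ord (val q).2 = maxn i (oth i q)).
Proof.
case: q => [[a b] h]; rewrite /inc /oth /= => /orP[] /eqP ->; rewrite ?eqxx.
  by move: h; rewrite /=; lia.
have -> : (a == b) = false by apply/eqP => e; move: h; rewrite /= e ltnn.
by move: h; rewrite /=; lia.
Qed.

Lemma oth_inj n (i : 'I_n) : {in [pred q | inc i q] &, injective (oth i)}.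
Proof.
move=> q q'; rewrite !inE => /oth_val [h1 h2] /oth_val [h1' h2'] e.
apply: val_inj; case: (val q) (val q') h1 h2 h1' h2' => [a b] [a' b'] /= h1 h2 h1' h2'.
by congr pair; apply: val_inj; rewrite /= ?h1 ?h1' ?h2 ?h2' e.
Qed.

Lemma oth_surj n (i j : 'I_n) : j != i -> exists2 q, inc i q & oth i q = j.
Proof.
move=> ne; case: (ltngtP i j) => [lt|gt|eq].
- exists (exist _ (i, j) lt); rewrite /inc /oth /= ?eqxx //.
- exists (exist _ (j, i) gt); rewrite /inc /oth /= ?eqxx ?orbT //.
  by rewrite (negbTE ne).
- by move: ne; rewrite (val_inj eq) eqxx.
Qed.

Lemma card_oth n (i : 'I_n) (P : 'I_n -> bool) :
  #|[set q | inc i q && P (oth i q)]| = #|[set j | (j != i) && P j]|.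
Proof.
rewrite -(card_in_imset (f := oth i)); last first.
  by move=> q q'; rewrite !inE => /andP[h _] /andP[h' _]; apply: oth_inj.
apply: eq_card => j; rewrite [in RHS]inE; apply/imsetP/andP.
  by case=> q; rewrite inE => /andP[h hp] ->; split => //; apply: oth_neq.
case=> ne hp; have [q h e] := oth_surj ne.
by exists q; rewrite // inE h e.
Qed.

Lemma so_construct n k (col : nat -> nat -> nat) (d : 'I_k) :
  n <= k ->
  (forall i j, col i j = col j i) ->
  (forall i j : 'I_n, i != j -> col i j < k) ->
  (forall i j : 'I_n, i != j -> col i j != i) ->
  (forall v j : 'I_n, j != v -> odd #|[set j' : 'I_n | (j' != v) && (col v j' == col v j)]|) ->
  exists c : SKn_V n -> 'I_k, strong_odd_coloring (@SKn_adj n) c.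
Proof.
move=> le sym lt neq odd_h.
pose c (x : SKn_V n) : 'I_k :=
  match x with inl i => widen_ord le i | inr p => insubd d (col (val p).1 (val p).2) end.
have cE p : val (c (inr p)) = col (val p).1 (val p).2.
  by rewrite /= val_insubd lt // E_neq.
have cne i p : inc i p -> c (inl i) != c (inr p).
  rewrite -val_eqE cE /= /inc => /orP[] /eqP ->; first by rewrite eq_sym neq // E_neq.
  by rewrite sym eq_sym neq // eq_sym E_neq.
exists c; split.
  move=> [i|p] [j|q] //= h; first exact: cne.
  by rewrite eq_sym; apply: cne.
move=> [i|p] u.
  rewrite nbhd_inl => /imsetP [p hp ->].
  have -> : [set w in inr @: [set p | inc i p] | c w == c (inr p)] =
            inr @: [set q | inc i q && ((fun j => col i j == col i (oth i p)) (oth i q))].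
    apply/setP => -[j|q]; rewrite [in LHS]inE.
      have F S : (inl j \in inr @: S) = false by apply/imsetP => -[].
      by rewrite !F.
    rewrite !(mem_imset _ _ (@inr_inj _ _)) !inE.
    case iq: (inc i q) => //=.
    rewrite -val_eqE !cE (oth_col sym iq).
    by rewrite inE in hp; rewrite (oth_col sym hp).
  rewrite card_imset; last exact: inr_inj.
  rewrite (card_oth i (fun j => col i j == col i (oth i p))); apply: odd_h; rewrite inE in hp; exact: oth_neq.
rewrite nbhd_inr => hu.
suff -> : [set w in [set inl (val p).1; inl (val p).2] | c w == c u] = [set u].
  by rewrite cards1.
apply/setP => w; rewrite !inE.
have winj : forall a b : 'I_n, (c (inl a) == c (inl b)) = (a == b).
  by move=> a b; rewrite -!val_eqE.
move: hu; rewrite !inE => /orP[] /eqP ->; case: w => [a|q] /=; rewrite ?(inj_eq (@inl_inj _ _)) ?winj //.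
  by case: (a == _); rewrite /= ?andbF ?andbT.
by case: (a == (val p).2); rewrite /= ?andbF ?andbT ?orbT.

Qed.

Definition mid m i j := ((i + j) * m.+1./2) %% m.

Lemma mid_mul2 m x : odd m -> x %% m = ((x * m.+1./2) %% m * 2) %% m.
Proof.
move=> om; rewrite modnMml -mulnA.
have -> : m.+1./2 * 2 = m.+1 by rewrite muln2 halfK /= om subn0.
by rewrite mulnS addnC modnMDl.
Qed.

Lemma mid_inj m v j j' : odd m -> j < m -> j' < m -> mid m v j = mid m v j' -> j = j'.
Proof.
move=> om hj hj' e.
have : (v + j) %% m = (v + j') %% m.
  by rewrite (mid_mul2 (v + j) om) (mid_mul2 (v + j') om) -/(mid m v j) -/(mid m v j') e.
by move/eqP; rewrite eqn_modDl !modn_small // => /eqP.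
Qed.

Lemma mid_neq m v j : odd m -> v < m -> j < m -> j != v -> mid m v j != v.
Proof.
move=> om hv hj; apply: contra => /eqP e.
have : (v + j) %% m = (v + v) %% m.
  by rewrite (mid_mul2 (v + j) om) -/(mid m v j) e addnn -muln2.
by move/eqP; rewrite eqn_modDl !modn_small.
Qed.

Lemma mid_lt m v j : 0 < m -> mid m v j < m.
Proof. by move=> h; rewrite /mid ltn_pmod. Qed.

Lemma mid_sym m i j : mid m i j = mid m j i.
Proof. by rewrite /mid addnC. Qed.

Lemma mid_case n m : odd m -> n <= m ->
  exists c : SKn_V n -> 'I_m, strong_odd_coloring (@SKn_adj n) c.
Proof.
move=> om le; have m0 : 0 < m by apply: odd_gt0.
have ltm (i : 'I_n) : i < m by apply: leq_trans (ltn_ord i) le.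
apply: (@so_construct n m (mid m) (Ordinal m0)) => //.
- by move=> i j; apply: mid_sym.
- by move=> i j _; apply: mid_lt.
- by move=> i j ne; apply: mid_neq; rewrite // eq_sym.
move=> v j ne.
suff -> : [set j' : 'I_n | (j' != v) && (mid m v j' == mid m v j)] = [set j] by rewrite cards1.
apply/setP => j'; rewrite !inE; apply/andP/eqP.
  by case=> _ /eqP e; apply: val_inj; apply: (mid_inj om (ltm j') (ltm j) e).
by move=> ->; rewrite ne.
Qed.

Lemma card_ltset n m : m <= n -> #|[set j : 'I_n | j < m]| = m.
Proof.
move=> le.
have inj : injective (widen_ord le) by move=> a b /(congr1 val) /= /val_inj.
rewrite -[RHS](card_ord m) -cardsT -(card_imset _ inj).
apply: eq_card => j; rewrite !inE; apply/idP/imsetP.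
  by move=> h; exists (Ordinal h) => //; apply: val_inj.
by case=> a _ ->; rewrite /= ltn_ord.
Qed.

Definition sig3 m b := m + (b - m).+1 %% 3.
Definition colE m i j :=
  if i < m then (if j < m then mid m i j else sig3 m j)
  else (if j < m then sig3 m i else mid 3 (i - m) (j - m)).

Lemma mid3_lt x y : mid 3 x y < 3.
Proof. exact: mid_lt. Qed.

Lemma ext_case m : odd m -> 3 <= m ->
  exists c : SKn_V (m + 3) -> 'I_(m + 3), strong_odd_coloring (@SKn_adj (m + 3)) c.
Proof.
move=> om m3.
have k0 : 0 < m + 3 by rewrite addn3.
have s3lt b : sig3 m b < m + 3 by rewrite /sig3 ltn_add2l ltn_pmod.
have s3ge b : m <= sig3 m b by rewrite /sig3 leq_addr.
have s3inj a b : m <= a -> a < m + 3 -> m <= b -> b < m + 3 -> sig3 m a = sig3 m b -> a = b.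
  by rewrite /sig3; lia.
have s3ne a : m <= a -> a < m + 3 -> sig3 m a != a by rewrite /sig3; lia.
have m3lt x y : mid 3 x y < m by apply: leq_trans (mid3_lt x y) m3.
apply: (@so_construct (m + 3) (m + 3) (colE m) (Ordinal k0)) => //.
- by move=> i j; rewrite /colE; case: (i < m); case: (j < m) => //; apply: mid_sym.
- move=> i j _; rewrite /colE; case: (i < m); case: (j < m) => //.
  + by apply: ltn_addr; apply: mid_lt; apply: odd_gt0.
  + by apply: ltn_addr.
- move=> i j ne; rewrite /colE.
  case: ltnP => hi; case: ltnP => hj.
  + by apply: mid_neq => //; rewrite eq_sym.
  + by rewrite neq_ltn (leq_trans hi (s3ge _)) orbT.
  + by apply: s3ne.
  + by rewrite neq_ltn (leq_trans (m3lt _ _) hi).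
move=> v j ne.
case: (ltnP v m) => hv; case: (ltnP j m) => hj.
- suff -> : [set j' : 'I_(m + 3) | (j' != v) && (colE m v j' == colE m v j)] = [set j].
    by rewrite cards1.
  apply/setP => j'; rewrite !inE /colE hv hj; case: (ltnP j' m) => hj'.
    apply/andP/eqP.
      by case=> _ /eqP e; apply: val_inj; apply: (mid_inj om hj' hj e).
    by move=> ->; rewrite ne.
  apply/andP/eqP; last by move=> e; move: hj'; rewrite e leqNgt hj.
  by case=> _ /eqP e; move: (s3ge j'); rewrite e leqNgt mid_lt // odd_gt0.
- suff -> : [set j' : 'I_(m + 3) | (j' != v) && (colE m v j' == colE m v j)] = [set j].
    by rewrite cards1.
  apply/setP => j'; rewrite !inE /colE hv (ltnNge j m) hj /=; case: (ltnP j' m) => hj'.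
    apply/andP/eqP; last by move=> e; move: hj'; rewrite e ltnNge hj.
    by case=> _ /eqP e; move: (s3ge j); rewrite -e leqNgt mid_lt // odd_gt0.
  apply/andP/eqP.
    by case=> _ /eqP e; apply: val_inj; apply: (s3inj _ _ hj' (ltn_ord _) hj (ltn_ord _) e).
  by move=> ->; rewrite ne.
- suff -> : [set j' : 'I_(m + 3) | (j' != v) && (colE m v j' == colE m v j)] =
            [set j' : 'I_(m + 3) | j' < m].
    by rewrite card_ltset ?leq_addr.
  apply/setP => j'; rewrite !inE /colE (ltnNge v m) hv hj /=; case: (ltnP j' m) => hj' /=.
    by rewrite eqxx andbT; apply: contraTneq hj' => ->; rewrite -leqNgt.
  apply/negbTE; rewrite negb_and; apply/orP; right.
  by rewrite neq_ltn (leq_trans (m3lt _ _) (s3ge _)).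
- suff -> : [set j' : 'I_(m + 3) | (j' != v) && (colE m v j' == colE m v j)] = [set j].
    by rewrite cards1.
  apply/setP => j'; rewrite !inE /colE (ltnNge v m) hv (ltnNge j m) hj /=; case: (ltnP j' m) => hj' /=.
    have -> : (j' == j) = false by apply: contraTF hj' => /eqP ->; rewrite -leqNgt.
    by rewrite (gtn_eqF (leq_trans (m3lt _ _) (s3ge v))) andbF.
  apply/andP/eqP; last by move=> ->; rewrite ne eqxx.
  case=> _ /eqP e; apply: ord_inj.
  have lt3 (a : 'I_(m + 3)) : a - m < 3 by have := ltn_ord a; lia.
  have := mid_inj (isT : odd 3) (lt3 j') (lt3 j) e.
  by move: hj hj'; lia.
Qed.

Lemma so_recolor n k (c : SKn_V n -> 'I_k) (phi : 'I_k -> 'I_k) :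
  injective phi -> strong_odd_coloring (@SKn_adj n) c ->
  strong_odd_coloring (@SKn_adj n) (phi \o c).
Proof.
move=> inj [pr od]; split.
  by move=> u v h; rewrite /= (inj_eq inj); exact: pr.
move=> v u h.
have -> : [set w in nbhd (@SKn_adj n) v | (phi \o c) w == (phi \o c) u] =
          [set w in nbhd (@SKn_adj n) v | c w == c u].
  by apply/setP => w; rewrite !inE /= (inj_eq inj).
exact: od.
Qed.

Definition o0 : 'I_4 := @Ordinal 4 0 isT.
Definition o1 : 'I_4 := @Ordinal 4 1 isT.
Definition o2 : 'I_4 := @Ordinal 4 2 isT.
Definition o3 : 'I_4 := @Ordinal 4 3 isT.
Definition I4 : seq 'I_4 := [:: o0; o1; o2; o3].
Definition mkE (a b : 'I_4) (h : a < b) : E 4 :=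
  exist (fun p : 'I_4 * 'I_4 => p.1 < p.2) (a, b) h.
Arguments mkE : clear implicits.
Definition e01 := mkE o0 o1 isT.
Definition e02 := mkE o0 o2 isT.
Definition e03 := mkE o0 o3 isT.
Definition e12 := mkE o1 o2 isT.
Definition e13 := mkE o1 o3 isT.
Definition e23 := mkE o2 o3 isT.
Definition E4 : seq (E 4) := [:: e01; e02; e03; e12; e13; e23].

Definition condp (g : E 4 -> 'I_4) : bool :=
  all (fun p : E 4 => (g p != (val p).1) && (g p != (val p).2)) E4 &&
  all (fun i : 'I_4 => all (fun p => inc i p ==>
      odd (count (fun q => inc i q && (g q == g p)) E4)) E4) I4.

Definition gx (x : 'I_4 * 'I_4 * 'I_4 * 'I_4 * 'I_4 * 'I_4) (p : E 4) : 'I_4 :=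
  let: (a,b,c,d,e,f) := x in
  match nat_of_ord (val p).1, nat_of_ord (val p).2 with
  | 0,1 => a | 0,2 => b | 0,3 => c | 1,2 => d | 1,3 => e | _,_ => f end.

Lemma no4 : all (fun a => all (fun b => all (fun c => all (fun d => all (fun e => all (fun f =>
   ~~ condp (gx (a,b,c,d,e,f))) I4) I4) I4) I4) I4) I4 = true.
Proof. vm_cast_no_check (erefl true). Qed.

Lemma I4_all (i : 'I_4) : i \in I4.
Proof.
case: i => [[|[|[|[|i]]]] hi] //; rewrite /I4 !inE -?val_eqE //=.
Qed.

Lemma E4_all (q : E 4) : q \in E4.
Proof.
case: q => [[[[|[|[|[|a]]]] ha] [[|[|[|[|b]]]] hb]] h] //=;
  rewrite /E4 !inE -?val_eqE //=.
Qed.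

Lemma E4_uniq : uniq E4.
Proof. by []. Qed.

Lemma card_E4 (P : pred (E 4)) : #|[set q | P q]| = count P E4.
Proof.
rewrite cardsE -size_filter.
have <- : #|filter P E4| = size (filter P E4) by apply/card_uniqP; rewrite filter_uniq.
by apply: eq_card => q; rewrite mem_filter E4_all andbT.
Qed.

Lemma condp_ext g1 g2 : g1 =1 g2 -> condp g1 = condp g2.
Proof.
move=> H; rewrite /condp; congr andb.
  by apply: eq_all => p; rewrite H.
apply: eq_all => i; apply: eq_all => p; rewrite H; congr (_ ==> odd _).
by apply: eq_count => q; rewrite !H.
Qed.

Lemma card_nbhd_inl n k (c : SKn_V n -> 'I_k) (i : 'I_n) (p : E n) :
  #|[set w in nbhd (@SKn_adj n) (inl i) | c w == c (inr p)]| =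
  #|[set q | inc i q && (c (inr q) == c (inr p))]|.
Proof.
rewrite nbhd_inl -(card_imset _ (@inr_inj ('I_n) (E n))); apply: eq_card => -[j|q].
  rewrite !inE.
  have F S : (inl j \in inr @: S) = false by apply/imsetP => -[].
  by rewrite !F.
by rewrite !inE !(mem_imset _ _ (@inr_inj _ _)) !inE.
Qed.

Lemma no_so4 (c : SKn_V 4 -> 'I_4) : ~ strong_odd_coloring (@SKn_adj 4) c.
Proof.
move=> H.
case: (injF_bij (so_inj H)) => g fg gf.
have H' := so_recolor (can_inj gf) H.
set c' := g \o c in H'.
have c'l i : c' (inl i) = i by rewrite /c' /= fg.
pose G p := c' (inr p).
have cp : condp G.
  apply/andP; split.
    apply/allP => p _; case: H' => pr _.
    have h1 := pr (inl (val p).1) (inr p); have h2 := pr (inl (val p).2) (inr p).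
    rewrite /= !eqxx ?orbT /= !c'l in h1 h2; have {}h1 := h1 isT; have {}h2 := h2 isT.
    by rewrite /G eq_sym h1 eq_sym h2.
  apply/allP => i _; apply/allP => p _; apply/implyP => ip.
  rewrite -card_E4 /G -card_nbhd_inl; case: H' => _; apply.
  by rewrite nbhd_inl mem_imset ?inE //; exact: inr_inj.
have gxE : gx (G e01, G e02, G e03, G e12, G e13, G e23) =1 G.
  move=> p; have := E4_all p; rewrite !inE.
  by do ![case/orP => [/eqP -> //|]]; move/eqP ->.
have := no4.
move/allP/(_ (G e01) (I4_all _))/allP/(_ (G e02) (I4_all _))/allP/(_ (G e03) (I4_all _)).
move/allP/(_ (G e12) (I4_all _))/allP/(_ (G e13) (I4_all _))/allP/(_ (G e23) (I4_all _)).
by rewrite (condp_ext gxE) cp.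
Qed.

Lemma card_E n : #|[set: E n]| = 'C(n, 2).
Proof.
rewrite cardsT card_sig.
have -> : #|[pred p : 'I_n * 'I_n | p.1 < p.2]| = \sum_(p : 'I_n * 'I_n) (p.1 < p.2 : nat).
  rewrite -sum1_card big_mkcond /=; apply: eq_bigr => p _; rewrite inE.
  by case: ltnP.
have -> : \sum_(p : 'I_n * 'I_n) (p.1 < p.2 : nat) = \sum_(i < n) \sum_(j < n) (i < j : nat).
  by rewrite pair_big.
rewrite exchange_big /=.
rewrite (eq_bigr (fun j : 'I_n => nat_of_ord j)).
  by rewrite -(big_mkord xpredT (fun j => j)) bin2_sum.
move=> j _; rewrite -[RHS](card_ltset (ltnW (ltn_ord j))) -sum1_card.
rewrite [RHS]big_mkcond; apply: eq_bigr => i _; rewrite inE; by case: ltnP.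
Qed.

Lemma card_inc n (a : 'I_n) : #|[set p : E n | inc a p]| = n.-1.
Proof.
have := card_oth a (fun _ => true).
have -> : [set q | inc a q && true] = [set p | inc a p] by apply/setP => q; rewrite !inE andbT.
move=> ->; rewrite -[n in RHS](card_ord n) -(cardC1 a); apply: eq_card => j.
by rewrite !inE andbT.
Qed.

Lemma card_avoid n (a : 'I_n) : #|[set p : E n | ~~ inc a p]| = 'C(n.-1, 2).
Proof.
have := cardsC [set p : E n | inc a p].
have -> : ~: [set p : E n | inc a p] = [set p | ~~ inc a p] by apply/setP => p; rewrite !inE.
rewrite card_inc -cardsT card_E.
case: n a => [[] //|n'] a /=; rewrite binS bin1 => e.
by apply/eqP; rewrite -(eqn_add2l n') e addnC.
Qed.

Lemma card_split n (S : {set SKn_V n}) :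
  #|S| = #|[set i | inl i \in S]| + #|[set p | inr p \in S]|.
Proof.
have Fl (i : 'I_n) (X : {set E n}) : (inl i \in inr @: X) = false by apply/imsetP => -[].
have Fr (p : E n) (X : {set 'I_n}) : (inr p \in inl @: X) = false by apply/imsetP => -[].
have eS : S = inl @: [set i | inl i \in S] :|: inr @: [set p | inr p \in S].
  apply/setP => -[i|p]; rewrite !inE.
    by rewrite (mem_imset _ _ (@inl_inj 'I_n (E n))) Fl inE orbF.
  by rewrite (mem_imset _ _ (@inr_inj 'I_n (E n))) Fr inE.
have disj : inl @: [set i | inl i \in S] :&: inr @: [set p | inr p \in S] = set0.
  by apply/setP => -[i|p]; rewrite !inE ?Fl ?Fr ?andbF.
rewrite {1}eS cardsU disj cards0 subn0 (card_imset _ (@inl_inj 'I_n (E n))).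
by rewrite (card_imset _ (@inr_inj 'I_n (E n))).
Qed.

Lemma handshake n (B : {set E n}) :
  \sum_(i < n) #|[set p in B | inc i p]| = #|B| * 2.
Proof.
rewrite (eq_bigr (fun i => \sum_(p in B) (inc i p : nat))); last first.
  move=> i _; rewrite -sum1_card [LHS]big_mkcond [RHS]big_mkcond.
  by apply: eq_bigr => p _; rewrite !inE; case: (p \in B); case: inc.
rewrite exchange_big /= -sum_nat_const; apply: eq_bigr => p _.
have <- : #|[set (val p).1; (val p).2]| = 2 by rewrite cards2 E_neq.
rewrite -sum1_card [RHS]big_mkcond; apply: eq_bigr => i _.
by rewrite !inE /inc; case: (_ || _).
Qed.

Lemma odd_sum_all n (F : 'I_n -> nat) :
  (forall i, odd (F i)) -> odd (\sum_(i < n) F i) = odd n.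
Proof.
move=> h.
have e : (\sum_(i < n) F i) %% 2 = n %% 2.
  rewrite -modn_summ (eq_bigr (fun _ => 1)) ?sum1_card ?card_ord // => i _.
  by rewrite modn2 h.
by move: e; rewrite !modn2; case: odd; case: odd.
Qed.
Lemma inc_oth n (i a : 'I_n) q : inc i q -> inc a q = (a == i) || (a == oth i q).
Proof.
rewrite /inc /oth => /orP[] /eqP ->; rewrite ?eqxx //.
by rewrite (negbTE (E_neq q)) orbC.
Qed.

Lemma binE' n : 0 < n -> 'C(n, 2) = 'C(n.-1, 2) + n.-1.
Proof. by case: n => // n _; rewrite binS bin1. Qed.

Lemma alpha_upper n (S : {set SKn_V n}) : 2 <= n ->
  odd_independent (@SKn_adj n) S ->
  #|S| <= (if odd n then 'C(n.-1, 2) + 1 else 'C(n, 2)).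
Proof.
move=> n2 /andP [/forall_inP ind /forall_inP od].
have nadj x y : x \in S -> y \in S -> ~~ SKn_adj x y.
  by move=> xS yS; have /forall_inP := ind x xS; apply.
have oddc v : v \notin S ->
    (#|nbhd (@SKn_adj n) v :&: S| == 0) || odd #|nbhd (@SKn_adj n) v :&: S|.
  by move=> vS; apply: od; rewrite inE.
have lt2 (i j : 'I_n) : inl i \in S -> inl j \in S -> ~~ (i < j).
  move=> iS jS; apply/negP => lt.
  pose p : E n := exist _ (i, j) lt.
  have pS : inr p \notin S by apply/negP => pS; move: (nadj _ _ iS pS); rewrite /= eqxx.
  move: (oddc _ pS); rewrite nbhd_inr /=.
  have -> : [set inl i; inl j] :&: S = [set inl i; inl j : SKn_V n].
    apply/setP => x; rewrite !inE.
    case: (x =P inl i) => [->|_] /=; first by rewrite iS.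
    by case: (x =P inl j) => [->|_]; rewrite ?jS.
  by rewrite cards2 (inj_eq (@inl_inj _ _)) neq_ltn lt /= => -[].
have Ale i j : inl i \in S -> inl j \in S -> i = j.
  move=> iS jS; apply: ord_inj; apply/eqP; rewrite eqn_leq (leqNgt i j) (leqNgt j i).
  by rewrite (lt2 _ _ iS jS) (lt2 _ _ jS iS).
have cardS := card_split S.
have Bbig : #|[set p | inr p \in S]| <= 'C(n, 2) by rewrite -card_E subset_leq_card ?subsetT.
have binE : 'C(n, 2) = 'C(n.-1, 2) + n.-1 by apply: binE'; apply: ltnW.
case: (set_0Vmem [set i | inl i \in S]) => [A0 | [a aA]].
  rewrite cardS A0 cards0 add0n.
  case: ifP => on; last by [].
  have notS i : inl i \notin S.
    apply/negP => iS; have : i \in [set i | inl i \in S] by rewrite inE.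
    by rewrite A0 inE.
  have degE i : #|nbhd (@SKn_adj n) (inl i) :&: S| = #|[set p in [set q | inr q \in S] | inc i p]|.
    rewrite nbhd_inl -(card_imset _ (@inr_inj 'I_n (E n))); apply: eq_card => -[j|p].
      have F X : (inl j \in inr @: X) = false by apply/imsetP => -[].
      by rewrite in_setI !F.
    by rewrite !inE !(mem_imset _ _ (@inr_inj 'I_n (E n))) !inE andbC.
  case: (pickP (fun i => #|[set p in [set q | inr q \in S] | inc i p]| == 0)) => [i0 h0 | hall].
    have sub : [set p | inr p \in S] \subset [set p | ~~ inc i0 p].
      apply/subsetP => p pB; rewrite inE; apply/negP => ip.
      rewrite inE in pB; move: h0; rewrite cards_eq0 => /eqP/setP/(_ p); rewrite !inE pB ip.
      by [].
    by apply: leq_trans (subset_leq_card sub) _; rewrite card_avoid leq_addr.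
  exfalso.
  have allodd i : odd #|[set p in [set q | inr q \in S] | inc i p]|.
    by move: (oddc _ (notS i)); rewrite degE (hall i).
  move: (odd_sum_all allodd); rewrite handshake on.
  by rewrite muln2 odd_double.
have aS : inl a \in S by rewrite inE in aA.
have Asub : [set i | inl i \in S] \subset [set a].
  by apply/subsetP => i; rewrite !inE => iA; rewrite (Ale _ _ iA aS).
have A1 : #|[set i | inl i \in S]| <= 1 by rewrite -(cards1 a) subset_leq_card.
have sub : [set p | inr p \in S] \subset [set p | ~~ inc a p].
  apply/subsetP => p pB; rewrite inE; apply/negP => ip.
  rewrite inE in pB.
  by move: (nadj _ _ aS pB); rewrite (_ : SKn_adj _ _ = inc a p) // ip.
have Bl : #|[set p | inr p \in S]| <= 'C(n.-1, 2) by rewrite -(card_avoid a) subset_leq_card.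
rewrite cardS; case: ifP => on.
  by rewrite addnC leq_add.
rewrite binE addnC; apply: leq_add => //; apply: leq_trans A1 _.
by move: n2; clear; lia.
Qed.

Lemma alpha_even n : 2 <= n -> ~~ odd n ->
  exists S : {set SKn_V n}, odd_independent (@SKn_adj n) S && (#|S| == 'C(n, 2)).
Proof.
move=> n2 en.
exists (inr @: [set: E n]); apply/andP; split; last first.
  by rewrite (card_imset _ (@inr_inj 'I_n (E n))) card_E.
apply/andP; split.
  apply/forall_inP => x /imsetP [p _ ->]; apply/forall_inP => y /imsetP [q _ ->] //.
apply/forall_inP => -[i|p]; rewrite inE; last first.
  by rewrite (mem_imset _ _ (@inr_inj 'I_n (E n))) inE.
move=> _; apply/orP; right.
have -> : nbhd (@SKn_adj n) (inl i) :&: inr @: [set: E n] = nbhd (@SKn_adj n) (inl i).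
  apply/setIidPl; rewrite nbhd_inl; apply/subsetP => x /imsetP [p _ ->].
  by rewrite (mem_imset _ _ (@inr_inj 'I_n (E n))).
rewrite nbhd_inl (card_imset _ (@inr_inj 'I_n (E n))) card_inc.
by case: n n2 en {i} => // n' _ /=; rewrite negbK.
Qed.

Lemma alpha_odd n : 2 <= n -> odd n ->
  exists S : {set SKn_V n}, odd_independent (@SKn_adj n) S && (#|S| == 'C(n.-1, 2) + 1).
Proof.
move=> n2 on.
have n0 : 0 < n by apply: ltnW.
pose a : 'I_n := Ordinal n0.
pose S := inl a |: inr @: [set p : E n | ~~ inc a p].
have Fl (i : 'I_n) (X : {set E n}) : (inl i \in inr @: X) = false by apply/imsetP => -[].
have memS x : (x \in S) = (match x with inl i => i == a | inr p => ~~ inc a p end).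
  case: x => [i|p]; rewrite !inE.
    by rewrite Fl orbF (inj_eq (@inl_inj _ _)).
  by rewrite (mem_imset _ _ (@inr_inj 'I_n (E n))) inE.
exists S; apply/andP; split; last first.
  rewrite cardsU1 (card_imset _ (@inr_inj 'I_n (E n))) card_avoid Fl addnC.
  by [].
apply/andP; split.
  apply/forall_inP => x xS; apply/forall_inP => y yS.
  rewrite memS in xS; rewrite memS in yS.
  case: x xS => [i|p]; case: y yS => [j|q] //=.
    by move=> /negbTE h /eqP ->; rewrite -/(inc a q) h.
  by move=> /eqP -> /negbTE h; rewrite -/(inc a p) h.
apply/forall_inP => -[i|p]; rewrite inE memS => h; apply/orP; right.
  have ia : a != i by rewrite eq_sym.
  have -> : nbhd (@SKn_adj n) (inl i) :&: S =
            inr @: [set q | inc i q && ((fun j => j != a) (oth i q))].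
    apply/setP => -[j|q]; rewrite in_setI.
      by rewrite nbhd_inl !Fl.
    rewrite nbhd_inl memS !(mem_imset _ _ (@inr_inj 'I_n (E n))) !inE.
    case iq: (inc i q) => //=.
    by rewrite (inc_oth a iq) (negbTE ia) /= eq_sym.
  rewrite (card_imset _ (@inr_inj 'I_n (E n))) (card_oth i (fun j => j != a)).
  have -> : [set j | (j != i) && (j != a)] = [set~ i] :\ a.
    by apply/setP => j; rewrite !inE andbC.
  have := cardsD1 a [set~ i]; rewrite cardsC1 card_ord !inE ia /= => e.
  have e2 : #|[set~ i] :\ a| = n - 2.
    by apply/eqP; rewrite -(eqn_add2l 1) -e; apply/eqP; move: n2; clear; lia.
  by rewrite e2 oddB // on.
rewrite negbK in h.
have -> : nbhd (@SKn_adj n) (inr p) :&: S = [set inl a].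
  apply/setP => -[j|q]; rewrite in_setI nbhd_inr memS !inE //.
  rewrite !(inj_eq (@inl_inj _ _)).
  case: (j =P a) => [->|_]; last by rewrite andbF.
  by rewrite andbT.
by rewrite cards1.
Qed.

Lemma no_so2 (c : SKn_V 2 -> 'I_2) : ~ strong_odd_coloring (@SKn_adj 2) c.
Proof.
move=> H.
have lt : (@Ordinal 2 0 isT) < (@Ordinal 2 1 isT) by [].
pose p : E 2 := exist _ (@Ordinal 2 0 isT, @Ordinal 2 1 isT) lt.
have h1 := so_inj_lt H lt.
have [pr _] := H.
have h2 := pr (inl (@Ordinal 2 0 isT)) (inr p) isT.
have h3 := pr (inl (@Ordinal 2 1 isT)) (inr p) isT.
move: h1 h2 h3; move: (c (inl _)) (c (inl _)) (c (inr p)) => x y z.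
rewrite -!val_eqE /=; have := ltn_ord x; have := ltn_ord y; have := ltn_ord z.
lia.
Qed.

Theorem proposition10 (n : nat) :
  2 <= n ->
  chi_so_is (@SKn_adj n) (if n == 2 then 3 else if n == 4 then 5 else n) /\
  alpha_od (@SKn_adj n) = (if odd n then 'C(n.-1, 2) + 1 else 'C(n, 2)).
Proof.
move=> n2; split.
  split.
    case: eqP => [->|n2ne]; first by apply: mid_case.
    case: eqP => [->|n4ne]; first by apply: mid_case.
    case on: (odd n); first by apply: mid_case.
    have m3 : 3 <= n - 3.
      by move: n2 n2ne n4ne on; clear; case: n => [|[|[|[|[|[|n]]]]]] //= *; lia.
    have om : odd (n - 3) by rewrite oddB ?on //; move: m3; clear; lia.
    have := ext_case om m3; rewrite subnK //; move: m3; clear; lia.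
  move=> k' lt [c H]; have le := so_lower H.
  move: lt; case: eqP => [e2|n2ne].
    subst n => lt; have ek : k' = 2 by move: lt le; clear; lia.
    by subst k'; apply: (no_so2 H).
  case: eqP => [e4|n4ne] lt.
    subst n; have ek : k' = 4 by move: lt le; clear; lia.
    by subst k'; apply: (no_so4 H).
  by move: lt le; clear; lia.
apply/eqP; rewrite eqn_leq; apply/andP; split.
  by apply/bigmax_leqP => S HS; apply: alpha_upper.
case: ifP => on.
  have [S /andP [HS /eqP <-]] := alpha_odd n2 on.
  by rewrite /alpha_od; apply: (@leq_bigmax_cond _ (odd_independent (@SKn_adj n)) (fun S => #|S|) S HS).
have [S /andP [HS /eqP <-]] := alpha_even n2 (negbT on).
by rewrite /alpha_od; apply: (@leq_bigmax_cond _ (odd_independent (@SKn_adj n)) (fun S => #|S|) S HS).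
Qed.
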